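(* Fix integers $S,T,m,m_{\max}\ge1$, finite sets $\mathcal{F}\subset\mathbb{R}^S$ and $\mathcal{T}\subset\mathbb{R}^T$, and $\alpha,\beta\ge0$ with $\alpha+\beta\le1$. Then the loss $\mathrm{FNGW}_{\alpha,\beta}:\mathcal{G}_m\times\mathcal{G}\to\mathbb{R}$ admits an Implicit Loss Embedding: there exist a separable Hilbert space $\mathcal{H}$ and measurable bounded maps $\psi:\mathcal{G}_m\to\mathcal{H}$, $\varphi:\mathcal{G}\to\mathcal{H}$ such that $\mathrm{FNGW}_{\alpha,\beta}(z,y)=\langle\psi(z),\varphi(y)\rangle_{\mathcal{H}}$ for all $z\in\mathcal{G}_m$, $y\in\mathcal{G}$, and $\|\varphi(y)\|_{\mathcal{H}}\le1$ for all $y\in\mathcal{G}$.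
   Context: $\mathcal{G}$ is the set of labeled graphs $g=(F,A,E,\boldsymbol p)$ with $m_g\le m_{\max}$ nodes, $A\in\{0,1\}^{m_g\times m_g}$, $F=(F_i)_{i=1}^{m_g}\in\mathcal{F}^{m_g}$, $E=(E_{ij})\in\mathcal{T}^{m_g\times m_g}$, $\boldsymbol p=m_g^{-1}\mathbb{1}_{m_g}$ (a finite set). $\mathcal{G}_m$ is the set of $(F,A,E,\boldsymbol p)$ with $A\in[0,1]^{m\times m}$, $F\in\mathrm{Conv}(\mathcal{F})^m$, $E\in\mathrm{Conv}(\mathcal{T})^{m\times m}$, $\boldsymbol p=m^{-1}\mathbb{1}_m$, where $\mathrm{Conv}$ is the convex hull. For $g_m=(F,A,E,\boldsymbol p)\in\mathcal{G}_m$ and $g=(\tilde F,\tilde A,\tilde E,\tilde{\boldsymbol p})\in\mathcal{G}$, $$\mathrm{FNGW}_{\alpha,\beta}(g_m,g)=\min_{\pi\in\Pi(\boldsymbol p,\tilde{\boldsymbol p})}\sum_{i,j,k,l}\Big[\alpha\|E(i,k)-\tilde E(j,l)\|^2_{\mathbb{R}^T}+\beta|A(i,k)-\tilde A(j,l)|^2+(1-\alpha-\beta)\|F(i)-\tilde F(j)\|^2_{\mathbb{R}^S}\Big]\pi_{k,l}\pi_{i,j},$$ where $\Pi(\boldsymbol p,\tilde{\boldsymbol p})$ is the set of nonnegative matrices with row sums $\boldsymbol p$ and column sums $\tilde{\boldsymbol p}$. $\mathcal{G}_m$ carries the topology of $\mathbb{R}^{m\times S}\times\mathbb{R}^{m\times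 m}\times\mathbb{R}^{m\times m\times T}$ and $\mathcal{G}$ the discrete topology. *)

(* Defs.v *)
From HB Require Import structures.
From mathcomp Require Import all_boot all_order all_algebra.
From mathcomp Require Import classical_sets reals.
Set Implicit Arguments. Unset Strict Implicit. Unset Printing Implicit Defensive.
Import Order.TTheory GRing.Theory Num.Theory.
Local Open Scope classical_set_scope.
Local Open Scope ring_scope.

Section Defs.
Variable R : realType.

Definition sigma_closed (T : Type) (S : set (set T)) : Prop :=
  [/\ S set0,
      (forall A, S A -> S (~` A)) &
      (forall A : nat -> set T, (forall n, S (A n)) -> S (\bigcup_n A n))].

Definition sigma_gen (T : Type) (G : set (set T)) : set (set T) :=
  fun A => forall S, sigma_closed S -> (forall B, G B -> S B) -> S A.

Definition borel_measurable (A B : Type) (openA : set (set A))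
  (openB : set (set B)) (f : A -> B) : Prop :=
  forall U, sigma_gen openB U -> sigma_gen openA (f @^-1` U).

Definition ip_norm (H : lmodType R) (ip : H -> H -> R) (x : H) : R :=
  Num.sqrt (ip x x).

Definition is_separable_hilbert (H : lmodType R) (ip : H -> H -> R) : Prop :=
  [/\ (forall a x y z, ip (a *: x + y) z = a * ip x z + ip y z),
      (forall x y, ip x y = ip y x),
      (forall x, 0 <= ip x x),
      (forall x, ip x x = 0 -> x = 0) &
      (
      (forall u : nat -> H,
         (forall e, 0 < e -> exists N, forall p q, (N <= p)%N -> (N <= q)%N ->
              ip_norm ip (u p - u q) < e) ->
         exists l, forall e, 0 < e -> exists N, forall n, (N <= n)%N ->
              ip_norm ip (u n - l) < e) /\
      (exists d : nat -> H, forall x e, 0 < e -> exists n, ip_norm ip (x - d n) < e))].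

Definition ip_open (H : lmodType R) (ip : H -> H -> R) : set (set H) :=
  fun U => forall x, U x -> exists2 e, 0 < e &
     forall y, ip_norm ip (y - x) < e -> U y.

Definition sqnorm (n : nat) (v : 'rV[R]_n) : R := \sum_(k < n) (v ord0 k) ^+ 2.

Definition conv_hull (n : nat) (s : seq 'rV[R]_n) (x : 'rV[R]_n) : Prop :=
  exists w : 'I_(size s) -> R,
    [/\ (forall i, 0 <= w i), \sum_i w i = 1 &
        x = \sum_i w i *: nth 0 s i].

(* a labeled graph (F, A, E) with n nodes; p is the uniform weight 1/n *)
Record graph (S T : nat) := Graph {
  gn : nat;
  gF : 'I_gn -> 'rV[R]_S;
  gA : 'I_gn -> 'I_gn -> R;
  gE : 'I_gn -> 'I_gn -> 'rV[R]_T }.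
Arguments gn {S T} g.
Arguments gF {S T} g _.
Arguments gA {S T} g _ _.
Arguments gE {S T} g _ _.

Definition in_calG (S T mmax : nat) (Fs : seq 'rV[R]_S) (Ts : seq 'rV[R]_T)
  (g : graph S T) : Prop :=
  [/\ (1 <= gn g <= mmax)%N,
      (forall i, gF g i \in Fs),
      (forall i j, gA g i j = 0 \/ gA g i j = 1) &
      (forall i j, gE g i j \in Ts)].

Definition in_calGm (S T m : nat) (Fs : seq 'rV[R]_S) (Ts : seq 'rV[R]_T)
  (g : graph S T) : Prop :=
  [/\ gn g = m,
      (forall i, conv_hull Fs (gF g i)),
      (forall i j, 0 <= gA g i j <= 1) &
      (forall i j, conv_hull Ts (gE g i j))].

(* coordinatewise eps-closeness of two graphs with the same nodes
   (Euclidean topology of R^{m x S} x R^{m x m} x R^{m x m x T}) *)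
Definition graph_close (S T : nat) (eps : R) (g g' : graph S T) : Prop :=
  exists e : gn g = gn g',
    [/\ (forall i k, `|gF g i ord0 k - gF g' (cast_ord e i) ord0 k| < eps),
        (forall i j, `|gA g i j - gA g' (cast_ord e i) (cast_ord e j)| < eps) &
        (forall i j k, `|gE g i j ord0 k - gE g' (cast_ord e i) (cast_ord e j) ord0 k| < eps)].

Definition calG S T mmax Fs Ts := {g : graph S T | in_calG mmax Fs Ts g}.
Definition calGm S T m Fs Ts := {g : graph S T | in_calGm m Fs Ts g}.

Definition calGm_open S T m Fs Ts : set (set (@calGm S T m Fs Ts)) :=
  fun U => forall z, U z -> exists2 e, 0 < e &
    forall z', graph_close e (sval z) (sval z') -> U z'.

Definition discrete_open (A : Type) : set (set A) := fun _ => True.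

Definition coupling (m n : nat) (pi : 'I_m -> 'I_n -> R) : Prop :=
  [/\ (forall i j, 0 <= pi i j),
      (forall i, \sum_j pi i j = m%:R^-1) &
      (forall j, \sum_i pi i j = n%:R^-1)].

Definition fngw_cost (S T : nat) (alpha beta : R) (g g' : graph S T)
  (pi : 'I_(gn g) -> 'I_(gn g') -> R) : R :=
  \sum_(i < gn g) \sum_(j < gn g') \sum_(k < gn g) \sum_(l < gn g')
    (alpha * sqnorm (gE g i k - gE g' j l)
     + beta * (gA g i k - gA g' j l) ^+ 2
     + (1 - alpha - beta) * sqnorm (gF g i - gF g' j)) * pi k l * pi i j.

(* FNGW = min over couplings; the minimum is attained (compact set,
   continuous cost), so it equals the infimum *)
Definition FNGW (S T : nat) (alpha beta : R) (g g' : graph S T) : R :=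
  inf [set fngw_cost alpha beta pi | pi in @coupling (gn g) (gn g')].

End Defs.

(* Main.v *)
Require Import Defs.
From HB Require Import structures.
From mathcomp Require Import all_boot all_order all_algebra.
From mathcomp Require Import classical_sets reals.
From mathcomp Require Import boolp.
From mathcomp Require Import ring lra.
From mathcomp Require topology normedtype sequences.
Import Order.TTheory GRing.Theory Num.Theory.
Set Implicit Arguments. Unset Strict Implicit. Unset Printing Implicit Defensive.
Local Open Scope classical_set_scope.
Local Open Scope ring_scope.

Module RC.
Import topology normedtype sequences.
Import numFieldNormedType.Exports.
Lemma R_complete (R : realType) (u : nat -> R) :
  (forall e, 0 < e -> exists N, forall p q, (N <= p)%N -> (N <= q)%N -> `|u p - u q| < e) ->
  exists l, forall e, 0 < e -> exists N, forall n, (N <= n)%N -> `|u n - l| < e.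
Proof.
move=> Hc.
have : cvg (u @ \oo).
  apply/cauchy_cvgP/cauchy_exP => e e0.
  have [N HN] := Hc e e0.
  exists (u N); exists N => // n /= Hn.
  rewrite /ball /=. exact: HN.
move=> /cvg_ex [l Hl]; exists l => e e0.
move/cvgrPdist_lt: Hl => /(_ e e0) [N _ HN].
exists N => n Hn; rewrite distrC; exact: HN.
Qed.
End RC.
Import RC.
Definition dot (R : realType) (N : nat) (x y : 'rV[R]_N) : R :=
  \sum_k x ord0 k * y ord0 k.

Lemma dot_ge0 (R : realType) N (x : 'rV[R]_N) : 0 <= dot x x.
Proof. by apply: sumr_ge0 => k _; rewrite -expr2 sqr_ge0. Qed.

Lemma dot_coord (R : realType) N (x : 'rV[R]_N) k :
  `|x ord0 k| <= ip_norm (@dot R N) x.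
Proof.
rewrite /ip_norm -sqrtr_sqr ler_wsqrtr // /dot (bigD1 k) //= expr2 lerDl.
by apply: sumr_ge0 => i _; rewrite -expr2 sqr_ge0.
Qed.

Lemma norm_le (R : realType) N (x : 'rV[R]_N) d :
  (forall k, `|x ord0 k| <= d) -> ip_norm (@dot R N) x <= N%:R * d.
Proof.
case: N x => [|n] x Hx.
  by rewrite /ip_norm /dot big_ord0 sqrtr0 mul0r.
have d0 : 0 <= d by apply: le_trans (Hx ord0).
have H1 : dot x x <= (n.+1%:R * d) ^+ 2.
  apply: (@le_trans _ _ (\sum_(k < n.+1) d * d)).
    apply: ler_sum => k _; apply: le_trans (ler_norm _) _.
    by rewrite normrM ler_pM.
  rewrite sumr_const card_ord -mulr_natl.
  have hn : 1 <= n.+1%:R :> R by rewrite ler1n.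
  nra.
rewrite /ip_norm; apply: le_trans (ler_wsqrtr H1) _.
by rewrite sqrtr_sqr ger0_norm // mulr_ge0.
Qed.

Lemma norm_lt (R : realType) N (x : 'rV[R]_N) e : 0 < e ->
  (forall k, `|x ord0 k| <= e / (N%:R + 1)) -> ip_norm (@dot R N) x < e.
Proof.
move=> e0 /norm_le H; apply: le_lt_trans H _.
rewrite mulrA ltr_pdivrMr ?ltr_wpDl // mulrC ltr_pM2l //.
by rewrite ltrDl.
Qed.

Lemma dot_hilbert (R : realType) N : is_separable_hilbert (@dot R N).
Proof.
split.
- move=> a x y z; rewrite /dot mulr_sumr -big_split /=.
  by apply: eq_bigr => k _; rewrite !mxE mulrDl mulrA.
- by move=> x y; rewrite /dot; apply: eq_bigr => k _; rewrite mulrC.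
- exact: dot_ge0.
- move=> x /eqP; rewrite psumr_eq0 => [/allP H|k _]; last by rewrite -expr2 sqr_ge0.
  apply/matrixP => i k; rewrite (ord1 i) mxE.
  by have /implyP := H k (mem_index_enum _); rewrite -expr2 sqrf_eq0 => /(_ isT)/eqP.
split.
- move=> u Hu.
  have Hk : forall k, exists l, forall e, 0 < e -> exists M, forall n, (M <= n)%N ->
      `|u n ord0 k - l| < e.
    move=> k; apply: R_complete => e e0.
    have [M HM] := Hu e e0; exists M => p q hp hq.
    apply: le_lt_trans (HM p q hp hq); apply: le_trans (dot_coord _ k).
    by rewrite !mxE.
  have [l Hl] := fin_all_exists Hk.
  exists (\row_k l k) => e e0.
  have e'0 : 0 < e / (N%:R + 1) by rewrite divr_gt0 // ltr_wpDl.
  have HM : forall k, exists M, forall n, (M <= n)%N -> `|u n ord0 k - l k| < e / (N%:R + 1).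
    by move=> k; apply: Hl.
  have [M HM'] := fin_all_exists HM.
  exists (\max_k M k)%N => n hn; apply: norm_lt => // k.
  rewrite !mxE; apply/ltW/HM'; apply: leq_trans hn.
  exact: (leq_bigmax k).
- exists (fun n => match (unpickle n : option 'rV[rat]_N) with
                  | Some q => map_mx ratr q | None => 0 end) => x e e0.
  have e'0 : 0 < e / (N%:R + 1) by rewrite divr_gt0 // ltr_wpDl.
  have Hq : forall k, exists q : rat, `|x ord0 k - ratr q| < e / (N%:R + 1).
    move=> k.
    have hlt : x ord0 k - e / (N%:R + 1) < x ord0 k + e / (N%:R + 1).
      by rewrite ltrD2l gtrN.
    have [q] := rat_in_itvoo hlt.
    rewrite in_itv /= => /andP [h1 h2]; exists q.
    rewrite ltr_norml; apply/andP; split; lra.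
  have [q Hq'] := fin_all_exists Hq.
  exists (pickle (\row_k q k : 'rV[rat]_N)); rewrite pickleK.
  apply: norm_lt => // k; rewrite !mxE; exact/ltW.
Qed.
Lemma sigma_gen_closed (T : Type) (G : set (set T)) : sigma_closed (sigma_gen G).
Proof.
split.
- by move=> S [h0 _ _] _.
- by move=> A hA S hS hG; case: (hS) => _ hC _; apply: hC; apply: hA.
- by move=> A hA S hS hG; case: (hS) => _ _ hU; apply: hU => n; apply: hA.
Qed.

Lemma sigma_gen_incl (T : Type) (G : set (set T)) B : G B -> sigma_gen G B.
Proof. by move=> hB S _ hG; apply: hG. Qed.

Lemma meas_of_open (A B : Type) (oA : set (set A)) (oB : set (set B)) (f : A -> B) :
  (forall U, oB U -> sigma_gen oA (f @^-1` U)) -> borel_measurable oA oB f.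
Proof.
move=> hf U hU; apply: (hU (fun V => sigma_gen oA (f @^-1` V))) => //.
have [h0 hC hU'] := sigma_gen_closed oA.
split.
- by rewrite preimage_set0.
- by move=> V hV; rewrite -preimage_setC; apply: hC.
- by move=> V hV; rewrite preimage_bigcup; apply: hU'.
Qed.
Lemma sum_diff_le (R : realType) n (f g : 'I_n -> R) c :
  (forall i, `|f i - g i| <= c) -> `|\sum_i f i - \sum_i g i| <= n%:R * c.
Proof.
move=> H; rewrite -sumrB; apply: le_trans (ler_norm_sum _ _ _) _.
apply: le_trans (ler_sum _ (fun i _ => H i)) _.
by rewrite sumr_const card_ord mulr_natl.
Qed.

Lemma sq_diff (R : realType) (a b c M d : R) :
  `|a| <= M -> `|b| <= M -> `|c| <= M -> `|a - b| <= d ->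
  `|(a - c) ^+ 2 - (b - c) ^+ 2| <= d * (4 * M).
Proof.
move=> ha hb hc hab.
have -> : (a - c) ^+ 2 - (b - c) ^+ 2 = (a - b) * (a + b - 2 * c).
  by rewrite !expr2; ring.
rewrite normrM; apply: ler_pM => //.
move: ha hb hc; rewrite !ler_norml => /andP[? ?] /andP[? ?] /andP[? ?].
apply/andP; split; lra.
Qed.

Lemma sq_bnd (R : realType) (a c M : R) :
  `|a| <= M -> `|c| <= M -> `|(a - c) ^+ 2| <= 4 * M ^+ 2.
Proof.
move=> ha hc; rewrite normrX; have h0 : 0 <= M by apply: le_trans ha.
have : `|a - c| <= 2 * M.
  apply: le_trans (ler_normB _ _) _; lra.
move=> h; have h1 : 0 <= `|a - c| by [].
rewrite expr2; nra.
Qed.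

Lemma sqnorm_diff (R : realType) p (a b c : 'rV[R]_p) M d :
  (forall k, `|a ord0 k| <= M) -> (forall k, `|b ord0 k| <= M) ->
  (forall k, `|c ord0 k| <= M) -> (forall k, `|a ord0 k - b ord0 k| <= d) ->
  `|sqnorm (a - c) - sqnorm (b - c)| <= p%:R * (d * (4 * M)).
Proof.
move=> ha hb hc hd; apply: sum_diff_le => k; rewrite !mxE; exact: sq_diff.
Qed.

Lemma sqnorm_bnd (R : realType) p (a c : 'rV[R]_p) M :
  (forall k, `|a ord0 k| <= M) -> (forall k, `|c ord0 k| <= M) ->
  `|sqnorm (a - c)| <= p%:R * (4 * M ^+ 2).
Proof.
move=> ha hc.
have H := @sum_diff_le R p (fun k => (a - c) ord0 k ^+ 2) (fun _ => 0) (4 * M ^+ 2).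
rewrite /= big1_eq subr0 in H; apply: H => k; rewrite subr0 !mxE; exact: sq_bnd.
Qed.

Lemma sqnorm_ge0 (R : realType) p (a : 'rV[R]_p) : 0 <= sqnorm a.
Proof. by apply: sumr_ge0 => k _; rewrite sqr_ge0. Qed.

Lemma comb3 (R : realType) (a b c x1 x2 y1 y2 z1 z2 X Y Z : R) :
  0 <= a <= 1 -> 0 <= b <= 1 -> 0 <= c <= 1 ->
  `|x1 - x2| <= X -> `|y1 - y2| <= Y -> `|z1 - z2| <= Z ->
  `|(a * x1 + b * y1 + c * z1) - (a * x2 + b * y2 + c * z2)| <= X + Y + Z.
Proof.
move=> /andP[a0 a1] /andP[b0 b1] /andP[c0 c1] hx hy hz.
have -> : (a * x1 + b * y1 + c * z1) - (a * x2 + b * y2 + c * z2)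
   = a * (x1 - x2) + b * (y1 - y2) + c * (z1 - z2) by ring.
apply: le_trans (ler_normD _ _) _; apply: lerD; last first.
  rewrite normrM ger0_norm //; apply: le_trans hz.
  by rewrite ler_piMl.
apply: le_trans (ler_normD _ _) _; apply: lerD.
  rewrite normrM ger0_norm //; apply: le_trans hx.
  by rewrite ler_piMl.
rewrite normrM ger0_norm //; apply: le_trans hy.
by rewrite ler_piMl.
Qed.

Definition gbnd (R : realType) S T (M : R) (g : graph R S T) : Prop :=
  [/\ (forall i k, `|gF (g:=g) i ord0 k| <= M),
      (forall i j, `|gA (g:=g) i j| <= M) &
      (forall i j k, `|gE (g:=g) i j ord0 k| <= M)].

Lemma cost_ge0 (R : realType) S T (alpha beta : R) (g y : graph R S T) pi :
  0 <= alpha -> 0 <= beta -> alpha + beta <= 1 -> (forall i j, 0 <= pi i j) ->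
  0 <= fngw_cost alpha beta (g:=g) (g':=y) pi.
Proof.
move=> a0 b0 ab pi0; rewrite /fngw_cost.
do 4 (apply: sumr_ge0 => ? _).
have g0 : 0 <= 1 - alpha - beta by lra.
apply: mulr_ge0 => //; apply: mulr_ge0 => //.
apply: addr_ge0; first apply: addr_ge0.
- exact: mulr_ge0 (sqnorm_ge0 _).
- exact: mulr_ge0 (sqr_ge0 _).
- exact: mulr_ge0 (sqnorm_ge0 _).
Qed.

Lemma cost_lip (R : realType) S T (alpha beta : R) n (F1 F2 : 'I_n -> 'rV[R]_S)
  (A1 A2 : 'I_n -> 'I_n -> R) (E1 E2 : 'I_n -> 'I_n -> 'rV[R]_T)
  (y : graph R S T) M d (pi : 'I_n -> 'I_(gn y) -> R) :
  0 <= alpha -> 0 <= beta -> alpha + beta <= 1 -> (forall i j, 0 <= pi i j <= 1) ->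
  gbnd M (Graph F1 A1 E1) -> gbnd M (Graph F2 A2 E2) -> gbnd M y ->
  (forall i k, `|F1 i ord0 k - F2 i ord0 k| <= d) ->
  (forall i j, `|A1 i j - A2 i j| <= d) ->
  (forall i j k, `|E1 i j ord0 k - E2 i j ord0 k| <= d) ->
  `|fngw_cost alpha beta (g:=Graph F1 A1 E1) (g':=y) pi -
    fngw_cost alpha beta (g:=Graph F2 A2 E2) (g':=y) pi|
  <= n%:R * ((gn y)%:R * (n%:R * ((gn y)%:R * (T%:R * (d * (4 * M)) + d * (4 * M) + S%:R * (d * (4 * M)))))).
Proof.
move=> a0 b0 ab pi01 [hF1 hA1 hE1] [hF2 hA2 hE2] [hFy hAy hEy] dF dA dE.
rewrite /fngw_cost /=.
apply: sum_diff_le => i; apply: sum_diff_le => j; apply: sum_diff_le => k; apply: sum_diff_le => l.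
rewrite -!mulrBl !normrM.
have /andP[p0 p1] := pi01 k l; have /andP[q0 q1] := pi01 i j.
rewrite (ger0_norm p0) (ger0_norm q0) -mulrA.
apply: le_trans (ler_piMr _ _) _; [by [] | by rewrite mulr_ile1 |].
apply: comb3.
- by rewrite a0 /=; lra.
- by rewrite b0 /=; lra.
- apply/andP; split; lra.
- apply: sqnorm_diff => t.
  exact: (hE1 i k t). exact: (hE2 i k t). exact: (hEy j l t). exact: (dE i k t).
- apply: (@sq_diff _ _ _ _ M). exact: (hA1 i k). exact: (hA2 i k). exact: (hAy j l). exact: (dA i k).
- apply: sqnorm_diff => t.
  exact: (hF1 i t). exact: (hF2 i t). exact: (hFy j t). exact: (dF i t).
Qed.
Lemma sum_abs_le (R : realType) n (f : 'I_n -> R) c :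
  (forall i, `|f i| <= c) -> `|\sum_i f i| <= n%:R * c.
Proof.
move=> H; have := @sum_diff_le R n f (fun _ => 0) c.
rewrite /= big1_eq subr0; apply => i; rewrite subr0; exact: H.
Qed.

Lemma comb3b (R : realType) (a b c x y z X Y Z : R) :
  0 <= a <= 1 -> 0 <= b <= 1 -> 0 <= c <= 1 ->
  `|x| <= X -> `|y| <= Y -> `|z| <= Z ->
  `|a * x + b * y + c * z| <= X + Y + Z.
Proof.
move=> ha hb hc hx hy hz.
have := @comb3 R a b c x 0 y 0 z 0 X Y Z ha hb hc.
by rewrite !mulr0 !addr0 !subr0; apply.
Qed.

Lemma cost_bnd (R : realType) S T (alpha beta : R) (g y : graph R S T) M
  (pi : 'I_(gn g) -> 'I_(gn y) -> R) :
  0 <= alpha -> 0 <= beta -> alpha + beta <= 1 -> (forall i j, 0 <= pi i j <= 1) ->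
  gbnd M g -> gbnd M y ->
  `|fngw_cost alpha beta pi|
  <= (gn g)%:R * ((gn y)%:R * ((gn g)%:R * ((gn y)%:R *
        (T%:R * (4 * M ^+ 2) + 4 * M ^+ 2 + S%:R * (4 * M ^+ 2))))).
Proof.
move=> a0 b0 ab pi01 [hF1 hA1 hE1] [hFy hAy hEy].
rewrite /fngw_cost.
apply: sum_abs_le => i; apply: sum_abs_le => j; apply: sum_abs_le => k; apply: sum_abs_le => l.
rewrite !normrM.
have /andP[p0 p1] := pi01 k l; have /andP[q0 q1] := pi01 i j.
rewrite (ger0_norm p0) (ger0_norm q0) -mulrA.
apply: le_trans (ler_piMr _ _) _; [by [] | by rewrite mulr_ile1 |].
apply: comb3b.
- by rewrite a0 /=; lra.
- by rewrite b0 /=; lra.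
- apply/andP; split; lra.
- apply: sqnorm_bnd => t. exact: (hE1 i k t). exact: (hEy j l t).
- apply: sq_bnd. exact: (hA1 i k). exact: (hAy j l).
- apply: sqnorm_bnd => t. exact: (hF1 i t). exact: (hFy j t).
Qed.

Lemma coupling_exists (R : realType) n n' : (0 < n)%N -> (0 < n')%N ->
  @coupling R n n' (fun _ _ => (n%:R * n'%:R)^-1).
Proof.
move=> hn hn'; have n0 : n%:R != 0 :> R by rewrite pnatr_eq0 -lt0n.
have n0' : n'%:R != 0 :> R by rewrite pnatr_eq0 -lt0n.
split.
- by move=> i j; rewrite invr_ge0 mulr_ge0.
- move=> i; rewrite sumr_const card_ord -mulr_natl. field. by rewrite n0 n0'.
- move=> j; rewrite sumr_const card_ord -mulr_natl. field. by rewrite n0 n0'.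
Qed.

Lemma coupling_le1 (R : realType) n n' (pi : 'I_n -> 'I_n' -> R) :
  (0 < n)%N -> coupling pi -> forall i j, 0 <= pi i j <= 1.
Proof.
move=> hn [p0 hr _] i j; rewrite p0 /=.
apply: (@le_trans _ _ (\sum_j pi i j)).
  by rewrite (bigD1 j) //= lerDl sumr_ge0.
by rewrite hr invf_le1 // ?ler1n // ltr0n.
Qed.

Lemma FNGW_lb (R : realType) S T (alpha beta : R) (g y : graph R S T) :
  0 <= alpha -> 0 <= beta -> alpha + beta <= 1 ->
  has_lbound [set fngw_cost alpha beta (g:=g) (g':=y) pi | pi in @coupling R (gn g) (gn y)].
Proof.
move=> a0 b0 ab; exists 0 => _ [pi [p0 _ _] <-]; exact: cost_ge0.
Qed.

Lemma FNGW_le (R : realType) S T (alpha beta : R) (g y : graph R S T)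
  (pi : 'I_(gn g) -> 'I_(gn y) -> R) :
  0 <= alpha -> 0 <= beta -> alpha + beta <= 1 -> coupling pi ->
  FNGW alpha beta g y <= fngw_cost alpha beta (g:=g) (g':=y) pi.
Proof.
move=> a0 b0 ab hpi; rewrite /FNGW.
by apply: (ge_inf (FNGW_lb g y a0 b0 ab)); exists pi.
Qed.

Lemma FNGW_ge (R : realType) S T (alpha beta : R) (g y : graph R S T) x :
  (0 < gn g)%N -> (0 < gn y)%N ->
  (forall pi, coupling pi -> x <= fngw_cost alpha beta (g:=g) (g':=y) pi) ->
  x <= FNGW alpha beta g y.
Proof.
move=> hn hn' H; rewrite /FNGW; apply: lb_le_inf.
  by exists (fngw_cost alpha beta (fun (_ : 'I_(gn g)) (_ : 'I_(gn y)) => ((gn g)%:R * (gn y)%:R)^-1 : R));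
     exists (fun _ _ => ((gn g)%:R * (gn y)%:R)^-1) => //; exact: coupling_exists.
by move=> _ [pi hpi <-]; apply: H.
Qed.

Lemma FNGW_bnd (R : realType) S T (alpha beta : R) (g y : graph R S T) M :
  0 <= alpha -> 0 <= beta -> alpha + beta <= 1 ->
  (0 < gn g)%N -> (0 < gn y)%N -> gbnd M g -> gbnd M y ->
  `|FNGW alpha beta g y|
  <= (gn g)%:R * ((gn y)%:R * ((gn g)%:R * ((gn y)%:R *
        (T%:R * (4 * M ^+ 2) + 4 * M ^+ 2 + S%:R * (4 * M ^+ 2))))).
Proof.
move=> a0 b0 ab hn hn' hg hy.
have hc := coupling_exists R hn hn'.
rewrite ger0_norm; last first.
  by apply: FNGW_ge => // pi [p0 _ _]; apply: cost_ge0.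
apply: le_trans (FNGW_le _ _ _ hc) _ => //.
apply: le_trans (ler_norm _) _; apply: cost_bnd => //.
exact: coupling_le1 hc.
Qed.

Lemma FNGW_lip (R : realType) S T (alpha beta : R) (g1 g2 y : graph R S T) M d :
  0 <= alpha -> 0 <= beta -> alpha + beta <= 1 ->
  (0 < gn g1)%N -> (0 < gn y)%N -> gbnd M g1 -> gbnd M g2 -> gbnd M y ->
  graph_close d g1 g2 ->
  `|FNGW alpha beta g1 y - FNGW alpha beta g2 y|
  <= (gn g1)%:R * ((gn y)%:R * ((gn g1)%:R * ((gn y)%:R *
      (T%:R * (d * (4 * M)) + d * (4 * M) + S%:R * (d * (4 * M)))))).
Proof.
case: g1 => n F1 A1 E1; case: g2 => n2 F2 A2 E2 a0 b0 ab /= hn hn' h1 h2 hy [e [dF dA dE]].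
simpl in e; subst n2.
have ci : forall (e1 : n = n) (i : 'I_n), cast_ord e1 i = i by move=> e1 i; apply: val_inj.
set L := (X in _ <= X).
have H : forall (pi : 'I_n -> 'I_(gn y) -> R), coupling pi ->
   `|fngw_cost alpha beta (g:=Graph F1 A1 E1) (g':=y) pi -
     fngw_cost alpha beta (g:=Graph F2 A2 E2) (g':=y) pi| <= L.
  move=> pi hpi; apply: cost_lip => //.
  - exact: coupling_le1 hpi.
  - by move=> i k; have := dF i k; rewrite ci => /ltW.
  - by move=> i j; have := dA i j; rewrite !ci => /ltW.
  - by move=> i j k; have := dE i j k; rewrite !ci => /ltW.
have hA : FNGW alpha beta (Graph F1 A1 E1) y - L <= FNGW alpha beta (Graph F2 A2 E2) y.
  apply: FNGW_ge => // pi hpi.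
  have := @FNGW_le _ _ _ alpha beta (Graph F1 A1 E1) y pi a0 b0 ab hpi.
  have := H pi hpi; rewrite ler_norml => /andP[? ?]; lra.
have hB : FNGW alpha beta (Graph F2 A2 E2) y - L <= FNGW alpha beta (Graph F1 A1 E1) y.
  apply: FNGW_ge => // pi hpi.
  have := @FNGW_le _ _ _ alpha beta (Graph F2 A2 E2) y pi a0 b0 ab hpi.
  have := H pi hpi; rewrite ler_norml => /andP[? ?]; lra.
rewrite ler_norml; apply/andP; split; lra.
Qed.
Lemma le_sum1 (R : realType) (I : finType) (c : I -> R) k :
  (forall k, 0 <= c k) -> c k <= \sum_k c k.
Proof. by move=> h; rewrite (bigD1 k) //= lerDl sumr_ge0. Qed.

Definition MS (R : realType) p (s : seq 'rV[R]_p) : R :=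
  \sum_(v <- s) \sum_k `|v ord0 k|.

Lemma MS_ge0 (R : realType) p (s : seq 'rV[R]_p) : 0 <= MS s.
Proof. by apply: sumr_ge0 => v _; apply: sumr_ge0. Qed.

Lemma MS_mem (R : realType) p (s : seq 'rV[R]_p) v k :
  v \in s -> `|v ord0 k| <= MS s.
Proof.
elim: s => [//|w s IH]; rewrite inE /MS big_cons => /orP [/eqP ->|hv].
  rewrite -[X in X <= _]addr0 lerD ?sumr_ge0 //.
    by apply: le_sum1.
  by move=> v' _; apply: sumr_ge0.
rewrite -[X in X <= _]add0r lerD ?sumr_ge0 //; exact: IH.
Qed.

Lemma MS_nth (R : realType) p (s : seq 'rV[R]_p) j k :
  `|nth 0 s j ord0 k| <= MS s.
Proof.
case: (ltnP j (size s)) => hj; first by apply: MS_mem; rewrite mem_nth.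
by rewrite nth_default // mxE normr0 MS_ge0.
Qed.

Lemma MS_conv (R : realType) p (s : seq 'rV[R]_p) x k :
  conv_hull s x -> `|x ord0 k| <= MS s.
Proof.
case=> w [w0 w1 ->]; rewrite summxE.
apply: le_trans (ler_norm_sum _ _ _) _.
apply: (@le_trans _ _ (\sum_(i < size s) `|nth 0 s i ord0 k|)).
  apply: ler_sum => i _; rewrite !mxE normrM ger0_norm //.
  apply: ler_piMl => //; rewrite -w1; by apply: le_sum1.
rewrite /MS (big_nth 0) big_mkord; apply: ler_sum => i _.
by apply: le_sum1.
Qed.

Definition Mb (R : realType) S T (Fs : seq 'rV[R]_S) (Ts : seq 'rV[R]_T) : R :=
  1 + MS Fs + MS Ts.

Lemma Mb_ge (R : realType) S T (Fs : seq 'rV[R]_S) (Ts : seq 'rV[R]_T) :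
  [/\ 1 <= Mb Fs Ts, MS Fs <= Mb Fs Ts & MS Ts <= Mb Fs Ts].
Proof.
have := MS_ge0 Fs; have := MS_ge0 Ts; rewrite /Mb => h1 h2.
split; lra.
Qed.

Lemma calGm_bnd (R : realType) S T m (Fs : seq 'rV[R]_S) (Ts : seq 'rV[R]_T) g :
  in_calGm m Fs Ts g -> gbnd (Mb Fs Ts) g.
Proof.
case=> _ hF hA hE; have [h1 h2 h3] := Mb_ge Fs Ts; split.
- by move=> i k; apply: le_trans h2; apply: MS_conv.
- move=> i j; have /andP[a0 a1] := hA i j; rewrite ger0_norm //; exact: le_trans h1.
- by move=> i j k; apply: le_trans h3; apply: MS_conv.
Qed.

Definition Kt (R : realType) S T mmax (Fs : seq 'rV[R]_S) (Ts : seq 'rV[R]_T) : finType :=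
  ('I_mmax * {ffun 'I_mmax -> 'I_(size Fs).+1} * {ffun 'I_mmax * 'I_mmax -> bool}
    * {ffun 'I_mmax * 'I_mmax -> 'I_(size Ts).+1})%type.

Definition dec (R : realType) S T mmax (Fs : seq 'rV[R]_S) (Ts : seq 'rV[R]_T)
  (k : Kt mmax Fs Ts) : graph R S T :=
  let: (n, f, a, e) := k in
  @Graph R S T n.+1 (fun i => nth 0 Fs (f (widen_ord (ltn_ord n) i)))
    (fun i j => if a (widen_ord (ltn_ord n) i, widen_ord (ltn_ord n) j) then 1 else 0)
    (fun i j => nth 0 Ts (e (widen_ord (ltn_ord n) i, widen_ord (ltn_ord n) j))).

Lemma dec_gn (R : realType) S T mmax (Fs : seq 'rV[R]_S) (Ts : seq 'rV[R]_T)
  (k : Kt mmax Fs Ts) : (0 < gn (dec k))%N.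
Proof. by case: k => [[[n f] a] e]. Qed.

Lemma dec_bnd (R : realType) S T mmax (Fs : seq 'rV[R]_S) (Ts : seq 'rV[R]_T)
  (k : Kt mmax Fs Ts) : gbnd (Mb Fs Ts) (dec k).
Proof.
have [h1 h2 h3] := Mb_ge Fs Ts.
case: k => [[[n f] a] e]; split => /=.
- by move=> i k; apply: le_trans h2; apply: MS_nth.
- by move=> i j; case: ifP => _; rewrite ?normr1 ?normr0 //; apply: le_trans h1.
- by move=> i j k; apply: le_trans h3; apply: MS_nth.
Qed.

Lemma wid_val n m (h : (n <= m)%N) (i : 'I_n) : nat_of_ord (widen_ord h i) = i.
Proof. by []. Qed.

Lemma dec_surj (R : realType) S T mmax (Fs : seq 'rV[R]_S) (Ts : seq 'rV[R]_T)
  (y : graph R S T) : in_calG mmax Fs Ts y -> exists k : Kt mmax Fs Ts, y = dec k.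
Proof.
case: y => n F A E; rewrite /in_calG /= => -[/andP [hn1 hn2] hF hA hE].
case: n hn1 hn2 F A E hF hA hE => [//|n] _ hn F A E hF hA hE.
pose F' (j : nat) := if (insub j : option 'I_n.+1) is Some i then F i else 0.
pose A' (j1 j2 : nat) := if (insub j1 : option 'I_n.+1) is Some i then
   (if (insub j2 : option 'I_n.+1) is Some j then A i j else 0) else 0.
pose E' (j1 j2 : nat) := if (insub j1 : option 'I_n.+1) is Some i then
   (if (insub j2 : option 'I_n.+1) is Some j then E i j else 0) else 0.
exists (Ordinal hn,
        [ffun j : 'I_mmax => (inord (index (F' j) Fs) : 'I_(size Fs).+1)],
        [ffun p : 'I_mmax * 'I_mmax => A' p.1 p.2 == 1],
        [ffun p : 'I_mmax * 'I_mmax => (inord (index (E' p.1 p.2) Ts) : 'I_(size Ts).+1)]).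
rewrite /dec /=; congr Graph.
- apply: funext => i; rewrite ffunE /F'.
  rewrite ?wid_val.
  rewrite valK inordK ?nth_index //; try exact: hF.
  by rewrite ltnS; apply: ltnW; rewrite index_mem.
- apply: funext => i; apply: funext => j; rewrite ffunE /A' /=.
  rewrite ?wid_val.
  by rewrite !valK; case: (hA i j) => ->; rewrite ?eqxx // eq_sym oner_eq0.
- apply: funext => i; apply: funext => j; rewrite ffunE /E' /=.
  rewrite ?wid_val.
  rewrite !valK inordK ?nth_index //; try exact: hE.
  by rewrite ltnS; apply: ltnW; rewrite index_mem.
Qed.
Theorem proposition3p7 (R : realType) (S T m mmax : nat)
  (Fs : seq 'rV[R]_S) (Ts : seq 'rV[R]_T) (alpha beta : R) :
  (1 <= S)%N -> (1 <= T)%N -> (1 <= m)%N -> (1 <= mmax)%N ->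
  0 <= alpha -> 0 <= beta -> alpha + beta <= 1 ->
  exists (H : lmodType R) (ip : H -> H -> R),
    is_separable_hilbert ip /\
    exists (psi : calGm m Fs Ts -> H) (phi : calG mmax Fs Ts -> H),
      [/\ borel_measurable (@calGm_open R S T m Fs Ts) (ip_open ip) psi,
          borel_measurable (@discrete_open _) (ip_open ip) phi,
          (exists B : R, forall z, ip_norm ip (psi z) <= B),
          (exists B : R, forall y, ip_norm ip (phi y) <= B) &
          ((forall z y, FNGW alpha beta (sval z) (sval y) = ip (psi z) (phi y)) /\
          (forall y, ip_norm ip (phi y) <= 1))].
Proof.
move=> hS hT hm hmmax a0 b0 ab.
pose N := #|Kt mmax Fs Ts|.
exists ('rV[R]_N), (@dot R N); split; first exact: dot_hilbert.
pose f (z : calGm m Fs Ts) (k : 'I_N) :=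
  FNGW alpha beta (sval z) (dec (enum_val k)).
pose psi z := \row_k f z k.
have kof : forall y : calG mmax Fs Ts, {k : Kt mmax Fs Ts | sval y = dec k}.
  by move=> y; apply: cid; apply: dec_surj; exact: (svalP y).
pose phi (y : calG mmax Fs Ts) :=
  \row_(r < N) ((r == enum_rank (sval (kof y)))%:R : R).
have gm : forall z : calGm m Fs Ts, gn (sval z) = m by move=> z; case: (svalP z).
have gm0 : forall z : calGm m Fs Ts, (0 < gn (sval z))%N by move=> z; rewrite gm.
have bz : forall z : calGm m Fs Ts, gbnd (Mb Fs Ts) (sval z).
  by move=> z; apply: calGm_bnd (svalP z).
pose M := Mb Fs Ts.
have M0 : 0 <= M by have [h1 _ _] := Mb_ge Fs Ts; rewrite /M; lra.
pose nk (k : 'I_N) : R := (gn (dec (enum_val k)))%:R.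
pose X := T%:R * (4 * M) + 4 * M + S%:R * (4 * M).
have X0 : 0 <= X by rewrite /X !addr_ge0 // !mulr_ge0 // ?ler0n // mulr_ge0.
pose Cl k := m%:R * (nk k * (m%:R * (nk k * X))).
have Cl0 : forall k, 0 <= Cl k by move=> k; rewrite /Cl !mulr_ge0 // ler0n.
pose ClS := \sum_k Cl k.
have ClS0 : 0 <= ClS by apply: sumr_ge0 => k _.
pose Y := T%:R * (4 * M ^+ 2) + 4 * M ^+ 2 + S%:R * (4 * M ^+ 2).
have Y0 : 0 <= Y by rewrite /Y !addr_ge0 // !mulr_ge0 // ?ler0n // ?exprn_ge0 // mulr_ge0 // exprn_ge0.
pose Cb k := m%:R * (nk k * (m%:R * (nk k * Y))).
have Cb0 : forall k, 0 <= Cb k by move=> k; rewrite /Cb !mulr_ge0 // ler0n.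
have phin : forall y, ip_norm (@dot R N) (phi y) = 1.
  move=> y; rewrite /ip_norm /dot (bigD1 (enum_rank (sval (kof y)))) //= !mxE eqxx mulr1.
  rewrite big1 ?addr0 ?sqrtr1 // => r hr; rewrite !mxE (negbTE hr) mulr0 //.
exists psi, phi; split.
- apply: meas_of_open => U hU; apply: sigma_gen_incl => z hz.
  have [e e0 he] := hU _ hz.
  pose e' := e / (N%:R + 1).
  have e'0 : 0 < e' by rewrite divr_gt0 // ltr_wpDl.
  exists (e' / (ClS + 1)); first by rewrite divr_gt0 // ltr_wpDl.
  move=> z' hc; apply: he; apply: norm_lt => // k; rewrite !mxE distrC.
  rewrite /f; apply: le_trans (FNGW_lip a0 b0 ab (gm0 z) (dec_gn _) (bz z) (bz z') (dec_bnd _) hc) _.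
  rewrite gm.
  have -> : forall d : R, m%:R * ((gn (dec (enum_val k)))%:R * (m%:R * ((gn (dec (enum_val k)))%:R *
      (T%:R * (d * (4 * M)) + d * (4 * M) + S%:R * (d * (4 * M)))))) = d * Cl k.
    by move=> d; rewrite /Cl /nk /X; ring.
  apply: (@le_trans _ _ (e' / (ClS + 1) * ClS)).
    apply: ler_wpM2l; first by rewrite ltW // divr_gt0 // ltr_wpDl.
    by apply: le_sum1.
  rewrite mulrAC ler_pdivrMr ?ltr_wpDl // ler_pM2l //; lra.
- by apply: meas_of_open => U _; apply: sigma_gen_incl.
- exists (N%:R * \sum_k Cb k) => z; apply: norm_le => k; rewrite mxE.
  rewrite /f; apply: le_trans (FNGW_bnd a0 b0 ab (gm0 z) (dec_gn _) (bz z) (dec_bnd _)) _.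
  rewrite gm; exact: (le_sum1 k Cb0).
- by exists 1 => y; rewrite phin.
split; last by move=> y; rewrite phin.
move=> z y; rewrite /dot (bigD1 (enum_rank (sval (kof y)))) //= !mxE eqxx mulr1.
rewrite big1 ?addr0 => [|r hr]; last by rewrite !mxE (negbTE hr) mulr0.
by rewrite /f enum_rankK -(svalP (kof y)).
Qed.
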